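(* Let $m,n\ge1$ and let $\mu$ be a partition with fewer than $m$ positive parts and $\mu_1<n$. Then the $m\times n$ matrix $M^\mu(m,n)$ is a partial alternating sign matrix whose first row sum is $1$, whose first column sum is $1$, and all of whose other row sums and column sums are $0$.
   Context: A partition $\mu=(\mu_1\ge\mu_2\ge\cdots)$ is a weakly decreasing sequence of nonnegative integers with finitely many nonzero terms. For such $\mu$ with fewer than $m$ positive parts and $\mu_1<n$, the $m\times n$ matrix $M^\mu(m,n)$ has entries: $M^\mu_{1,\mu_1+1}=1$; for each $1\le k\le m-1$ with $\mu_k>\mu_{k+1}$, $M^\mu_{k+1,\mu_{k+1}+1}=1$ and $M^\mu_{k+1,\mu_k+1}=-1$; all other entries are $0$. An $m\times n$ partial alternating sign matrix is an $m\times n$ matrix $M$ with entries in $\{-1,0,1\}$ such that $\sum_{i'=1}^{i}M_{i'j}\in\{0,1\}$ and $\sum_{j'=1}^{j}M_{ij'}\in\{0,1\}$ for all $1\le i\le m$, $1\le j\le n$. *)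

(* Defs.v *)
From HB Require Import structures.
From mathcomp Require Import all_boot all_order all_algebra.
Set Implicit Arguments. Unset Strict Implicit. Unset Printing Implicit Defensive.
Import Order.TTheory GRing.Theory Num.Theory.
Local Open Scope ring_scope.

(* A partition mu = (mu_1 >= mu_2 >= ...) is represented by a finite sequence
   [:: mu_1; mu_2; ...; mu_r] of naturals; parts beyond the end are 0.
   Thus mu_k (1-indexed) = part mu (k-1) = nth 0 mu (k-1). *)
Definition part (mu : seq nat) (k : nat) : nat := nth 0%N mu k.

Definition is_partition (mu : seq nat) : Prop := sorted geq mu.

Definition npos_parts (mu : seq nat) : nat := count (fun x => 0 < x)%N mu.

(* Row 0 (paper row 1): a 1 in column mu_1 (paper column mu_1+1).
   Row i >= 1 (paper row k+1 with k = i): if mu_k > mu_{k+1}, a 1 in column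
   mu_{k+1} and a -1 in column mu_k (0-indexed columns). *)
Definition Mmu (mu : seq nat) (m n : nat) : 'M[int]_(m, n) :=
  \matrix_(i < m, j < n)
    if (i == 0%N :> nat) then ((j == part mu 0 :> nat) : int)
    else if (part mu i.-1 > part mu i)%N then
      ((j == part mu i :> nat) : int) - ((j == part mu i.-1 :> nat) : int)
    else 0.

Definition partial_ASM (m n : nat) (M : 'M[int]_(m, n)) : Prop :=
  (forall i j, M i j \in [:: -1; 0; 1]) /\
  (forall (i : 'I_m) (j : 'I_n),
      \sum_(i' < m | (i' <= i)%N) M i' j \in [:: 0; 1]) /\
  (forall (i : 'I_m) (j : 'I_n),
      \sum_(j' < n | (j' <= j)%N) M i j' \in [:: 0; 1]).

(* Main.v *)
Require Import Defs.
From HB Require Import structures.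
From mathcomp Require Import all_boot all_order all_algebra.
Import Order.TTheory GRing.Theory Num.Theory.
Local Open Scope ring_scope.

Lemma nth_mono1 (s : seq nat) : sorted geq s ->
  forall k, (nth 0%N s k.+1 <= nth 0%N s k)%N.
Proof.
elim: s => [|x t IH] //= Hs k.
have Ht := path_sorted Hs.
case: k => [|k] /=.
  by case: t Hs {IH Ht} => [|y t] //= /andP[].
exact: IH.
Qed.

Lemma nth_mono (s : seq nat) : sorted geq s ->
  forall i j, (i <= j)%N -> (nth 0%N s j <= nth 0%N s i)%N.
Proof.
move=> Hs i j; elim: j => [|j IH]; first by rewrite leqn0 => /eqP ->.
rewrite leq_eqVlt => /orP[/eqP -> //|Hij].
rewrite ltnS in Hij; apply: leq_trans (IH Hij); exact: nth_mono1.
Qed.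

Lemma pos_lt_count (s : seq nat) k : sorted geq s ->
  (0 < nth 0%N s k)%N -> (k < count (fun x => 0 < x)%N s)%N.
Proof.
elim: s k => [|x t IH] k Hs //=; first by rewrite nth_nil.
have Ht := path_sorted Hs.
case: k => [|k] /=; first by move=> ->.
move=> Hk.
have Hx : (0 < x)%N.
  apply: leq_trans Hk _.
  exact: (@nth_mono _ Hs 0 k.+1 (leq0n _)).
by rewrite Hx add1n ltnS IH.
Qed.

Lemma sum_ind n (P : pred 'I_n) (a : 'I_n) :
  \sum_(j < n | P j) ((j == a :> nat) : int) = (P a : int).
Proof.
case Pa: (P a).
  rewrite (bigD1 a) //= eqxx big1 ?addr0 // => j /andP[_ Hj].
  by move: Hj; rewrite -(inj_eq val_inj) => /negPf ->.
rewrite big1 // => j Pj.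
have: j != a by apply/eqP => E; rewrite E Pa in Pj.
by rewrite -(inj_eq val_inj) => /negPf ->.
Qed.

Definition Gf (mu : seq nat) (k j : nat) : int :=
  if (k == 0%N) then ((j == part mu 0 :> nat) : int)
  else if (part mu k.-1 > part mu k)%N then
    ((j == part mu k :> nat) : int) - ((j == part mu k.-1 :> nat) : int)
  else 0.

Lemma Gf_tel mu k j : is_partition mu ->
  Gf mu k.+1 j = ((j == part mu k.+1 :> nat) : int) - ((j == part mu k :> nat) : int).
Proof.
move=> Hs; rewrite /Gf; change (k.+1.-1) with k; case: ifP => // H.
have := @nth_mono1 _ Hs k; rewrite /part leq_eqVlt H orbF => /eqP ->.
by rewrite subrr.
Qed.

Lemma Gf_sum mu i j : is_partition mu ->
  \sum_(0 <= k < i.+1) Gf mu k j = ((j == part mu i :> nat) : int).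
Proof.
move=> Hs; elim: i => [|i IH]; first by rewrite big_nat1.
by rewrite big_nat_recr //= IH Gf_tel // addrC subrK.
Qed.

Lemma Mmu_E mu m n (i : 'I_m) (j : 'I_n) : Mmu mu m n i j = Gf mu i j.
Proof. by rewrite mxE. Qed.

Lemma colsum_partial mu m n (i : 'I_m) (j : 'I_n) : is_partition mu ->
  \sum_(i' < m | (i' <= i)%N) Mmu mu m n i' j = ((j == part mu i :> nat) : int).
Proof.
move=> Hs.
rewrite (eq_bigr (fun i' : 'I_m => Gf mu i' j)); last by move=> k _; rewrite Mmu_E.
rewrite -(big_mkord (fun k => (k <= i)%N) (fun k => Gf mu k j)).
rewrite -Gf_sum // (big_nat_widen _ _ _ _ _ (ltn_ord i)).
by apply: eq_bigl => k.
Qed.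

Lemma sum_ind' n (P : pred 'I_n) (a : nat) (Ha : (a < n)%N) :
  \sum_(j < n | P j) ((j == a :> nat) : int) = (P (Ordinal Ha) : int).
Proof. exact: (@sum_ind n P (Ordinal Ha)). Qed.

Lemma in3 (b1 b2 : bool) : (b1 : int) - (b2 : int) \in [:: -1; 0; 1].
Proof. by case: b1; case: b2. Qed.

Theorem mainTheorem2 (m n : nat) (mu : seq nat) :
  (1 <= m)%N -> (1 <= n)%N ->
  is_partition mu -> (npos_parts mu < m)%N -> (part mu 0 < n)%N ->
  partial_ASM (Mmu mu m n) /\
  (forall i : 'I_m, \sum_(j < n) Mmu mu m n i j = ((i == 0%N :> nat) : int)) /\
  (forall j : 'I_n, \sum_(i < m) Mmu mu m n i j = ((j == 0%N :> nat) : int)).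
Proof.
case: m => // m _ _ Hs Hcnt H0.
have Hle k : (part mu k < n)%N.
  by apply: leq_ltn_trans H0; exact: (@nth_mono _ Hs 0 k (leq0n _)).
have Hpm : part mu m = 0%N.
  apply/eqP; rewrite -leqn0 leqNgt; apply/negP => Hp.
  by have := @pos_lt_count _ _ Hs Hp; rewrite ltnNge -ltnS Hcnt.
split; [split; [|split]|split].
- move=> i j; rewrite Mmu_E /Gf.
  case: ifP => _; first by case: (_ == _).
  case: ifP => _; [exact: in3 | by []].
- by move=> i j; rewrite colsum_partial //; case: (_ == _).
- move=> i j; rewrite (eq_bigr (fun j' : 'I_n => Gf mu i j')); last by move=> k _; rewrite Mmu_E.
  unfold Gf; case Hi0: (nat_of_ord i == 0%N).
    by rewrite (sum_ind' _ _ _ (Hle 0%N)); case: (_ <= _)%N.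
  case H: (part mu i.-1 > part mu i)%N; last by rewrite big1.
  rewrite sumrB (sum_ind' _ _ _ (Hle i)) (sum_ind' _ _ _ (Hle i.-1)) /=.
  case E1: (part mu i.-1 <= j)%N.
    by rewrite (leq_trans (ltnW H) E1).
  by case: (_ <= _)%N.
- move=> i; rewrite (eq_bigr (fun j' : 'I_n => Gf mu i j')); last by move=> k _; rewrite Mmu_E.
  unfold Gf; case Hi0: (nat_of_ord i == 0%N).
    by rewrite (sum_ind' _ xpredT _ (Hle 0%N)).
  case H: (part mu i.-1 > part mu i)%N; last by rewrite big1.
  by rewrite sumrB (sum_ind' _ xpredT _ (Hle i)) (sum_ind' _ xpredT _ (Hle i.-1)) /= subrr.
- move=> j; rewrite -Hpm -(@colsum_partial mu m.+1 n (@ord_max m) j Hs).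
  by apply: eq_bigl => i; rewrite /= -ltnS ltn_ord.
Qed.
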